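(* Let $X$ be a compact metric space and $(f_n)_{n\ge1}$ a sequence of continuous maps $X\to X$ converging uniformly to a function $\phi\colon X\to X$. Let $p\in\mathbb{N}^*$ and $x\in X$. Then $f_1^p(x)$ is a periodic point of $\phi$ if and only if there is a positive integer $n$ such that $f_1^p(x)=f_1^{p+n}(x)$.
   Context: $\mathbb{N}=\{1,2,\dots\}$, $\mathbb{N}^*$ the free ultrafilters on $\mathbb{N}$. For $r\in\mathbb{N}^*$, $r\text{-}\lim_m x_m$ is the unique $y$ with $\{m:x_m\in V\}\in r$ for all neighbourhoods $V$ of $y$. $f_1^m=f_m\circ\cdots\circ f_1$, $f_1^r(x)=r\text{-}\lim_m f_1^m(x)$ for $r\in\mathbb{N}^*$; $p+n=\{A:\{m:m+n\in A\}\in p\}$. A point $y$ is a periodic point of $\phi$ if $\phi^n(y)=y$ for some positive integer $n$. *)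

(* Defs.v *)
From HB Require Import structures.
From mathcomp Require Import all_boot all_order all_algebra.
From mathcomp Require Import all_classical all_reals all_analysis.
Set Implicit Arguments. Unset Strict Implicit. Unset Printing Implicit Defensive.
Import Order.TTheory GRing.Theory Num.Theory.
Local Open Scope classical_set_scope.

Definition free_ultrafilter (r : set_system nat) : Prop :=
  UltraFilter r /\ (forall A : set nat, finite_set A -> ~ r A).

(* p + n = {A : {m : m + n in A} in p} *)
Definition ushift (r : set_system nat) (n : nat) : set_system nat :=
  [set A | r [set m | A (m + n)%N]].

(* Compositions: iterf f m = f_m o ... o f_1, where the paper's f_k is f (k-1).
   iterf f 0 = id. *)
Fixpoint iterf {X : Type} (f : nat -> X -> X) (m : nat) : X -> X :=
  match m with
  | 0 => id
  | m'.+1 => fun x => f m' (iterf f m' x)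
  end.

(* r-lim_m u m : the point y with u @ r --> y (unique in a Hausdorff space);
   chosen by classical choice, default u 0 if no limit exists. *)
Definition rlim {X : topologicalType} (r : set_system nat) (u : nat -> X) : X :=
  xget (u 0%N) [set y | u @ r --> y].

Definition iterf_ultra {X : topologicalType} (f : nat -> X -> X)
  (r : set_system nat) (x : X) : X :=
  rlim r (fun m => iterf f m x).

Definition periodic_point {X : Type} (phi : X -> X) (y : X) : Prop :=
  exists n : nat, (0 < n)%N /\ iter n phi y = y.

(* Main.v *)
Require Import Defs.
From HB Require Import structures.
From mathcomp Require Import all_boot all_order all_algebra.
From mathcomp Require Import all_classical all_reals all_analysis.
Local Open Scope classical_set_scope.

Section S.
Context (R : realType) (X : metricType R) (p : set_system nat).
Hypothesis pU : UltraFilter p.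
Hypothesis pfree : forall A : set nat, finite_set A -> ~ p A.

Let pF : ProperFilter p := ultra_proper.

Lemma p_large (N : nat) : p [set m | (N <= m)%N].
Proof.
have [//|hC] := in_ultra_setVsetC [set m | (N <= m)%N] pU.
exfalso; apply: (pfree _ _ hC); apply: (sub_finite_set _ (finite_II N)).
by move=> m /= /negP; rewrite -ltnNge.
Qed.

Lemma p_eventually (P : nat -> Prop) : (\forall n \near \oo, P n) -> \forall m \near p, P m.
Proof.
case=> N _ HN; apply: filterS (p_large N) => m /= hm; exact: HN.
Qed.

Hypothesis Xc : compact [set: X].

Lemma ex_lim (u : nat -> X) : exists y : X, u @ p --> y.
Proof.
have [y [_ cy]] := Xc (u @ p) (fmap_proper_filter u pF) (@filterT _ (u @ p) _).
exists y => B By.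
have [//|hC] := in_ultra_setVsetC (u @^-1` B) pU.
have [z [nz bz]] := cy (~` B) B hC By.
by [].
Qed.

Lemma rlimP (u : nat -> X) : u @ p --> rlim p u.
Proof. exact: (xgetPex (u 0%N) (ex_lim u)). Qed.

Lemma lim_uniq (u : nat -> X) (y z : X) : u @ p --> y -> u @ p --> z -> y = z.
Proof. move=> h1 h2; exact: (cvg_unique (@metric_hausdorff _ X) h1 h2). Qed.


Variables (f : nat -> X -> X) (phi : X -> X).
Hypothesis fc : forall n, continuous (f n).
Hypothesis Ff : {uniform, f @ \oo --> phi}.

Lemma phic : continuous phi.
Proof.
apply: (uniform_limit_continuous _ _ Ff).
by exists 0%N => // n _; exact: fc.
Qed.

Lemma key (h : nat -> X) (y : X) (k : nat) :
  h @ p --> y -> (fun m => f (m + k)%N (h m)) @ p --> phi y.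
Proof.
move=> hy; apply/cvg_app_entourageP => A entA.
have h1 : \forall m \near p, split_ent A (phi y, phi (h m)).
  have : (phi \o h) @ p --> phi y by apply: cvg_comp hy _; exact: phic.
  by move/cvg_app_entourageP; apply; exact: entourage_split_ent.
have h2 : \forall m \near p, forall z, split_ent A (phi z, f (m + k)%N z).
  apply: p_eventually.
  have : \forall n \near \oo, forall z, split_ent A (phi z, f n z).
    apply: (Ff [set g | forall z, split_ent A (phi z, g z)]); apply/uniform_nbhs; exists (split_ent A); split.
      exact: entourage_split_ent.
    by move=> g Hg z; exact: Hg.
  case=> N _ HN; exists N => // n /= hn; apply: HN => /=.
  exact: leq_trans hn (leq_addr _ _).
apply: filterS (filterI h1 h2) => m [a b].
exact: (entourage_split (phi (h m)) entA a (b _)).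
Qed.

End S.

Theorem corollary3p14 (R : realType) (X : metricType R)
  (f : nat -> X -> X) (phi : X -> X) (p : set_system nat) (x : X) :
  compact [set: X] ->
  (forall n, continuous (f n)) ->
  {uniform, f @ \oo --> phi} ->
  free_ultrafilter p ->
  (periodic_point phi (iterf_ultra f p x) <->
   exists n : nat, (0 < n)%N /\ iterf_ultra f p x = iterf_ultra f (ushift p n) x).
Proof.
move=> Xc fc Ff [pU pfree].
have pF : ProperFilter p := @ultra_proper _ _ pU.
set g := fun m => iterf f m x.
set y := iterf_ultra f p x.
have hy : g @ p --> y := @rlimP R X p pU Xc g.
have hn : forall n, (fun m => g (m + n)%N) @ p --> iter n phi y.
  elim=> [|n IH] /=.
    by have -> : (fun m => g (m + 0)%N) = g by apply: funext => m; rewrite addn0.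
  have -> : (fun m => g (m + n.+1)%N) = (fun m => f (m + n)%N (g (m + n)%N)).
    by apply: funext => m; rewrite addnS.
  exact: (@key R X p pU pfree f phi fc Ff _ _ _ IH).
have E : forall n, iterf_ultra f (ushift p n) x = iter n phi y.
  move=> n; rewrite /iterf_ultra /rlim.
  have [w Hw] : exists w : X, g @ ushift p n --> w.
    have [w Hw] := @ex_lim R X p pU Xc (fun m => g (m + n)%N).
    by exists w.
  have Hx := @xgetPex X (g 0%N) [set z : X | g @ ushift p n --> z] (ex_intro _ w Hw).
  apply: (@lim_uniq R X p pU (fun m => g (m + n)%N)) => //.
split.
- case=> n [n0 hn0]; exists n; split => //; by rewrite E.
- case=> n [n0 hn0]; exists n; split => //; by rewrite -E.
Qed.
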